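(* Let $m\ge 2$ be an integer and $c_0=1/m$. For every $a\in(0,c_0)$ and every $a',b\in(0,c_0)$, the map $\kappa\colon\{1,\ldots,2m\}\to D$ defined by $\kappa(i)=\alpha_i$ and $\kappa(i+m)=\beta_i$ for $i\in\{1,\ldots,m\}$ induces isomorphisms of subshifts $\Sigma_{HC}^+\simeq\Sigma_D^+$ and $\Sigma_{HC}\simeq\Sigma_D$. That is, the coordinatewise map $(\omega_n)_{n\in\mathbb Z^+}\mapsto(\kappa(\omega_n))_{n\in\mathbb Z^+}$ is a homeomorphism from $\Sigma_{HC}^+=\mathrm{cl}(\pi_a(X_a))$ onto $\Sigma_D^+$, and the coordinatewise map $(\omega_n)_{n\in\mathbb Z}\mapsto(\kappa(\omega_n))_{n\in\mathbb Z}$ is a homeomorphism from $\Sigma_{HC}=\mathrm{cl}(\pi_{a',b}(X_{a',b}))$ onto $\Sigma_D$.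
   Context: Let $m\ge2$, $c_0=1/m$. For $a\in(0,c_0)$ let $F_a\colon[0,1]\to[0,1]$ be $F_a(x)=\frac{x-(i-1)a}{a}$ on $[(i-1)a,ia)$, $i\in\{1,\ldots,m\}$, and $F_a(x)=\frac{x-ma}{1-ma}$ on $[ma,1]$. Define $\Omega_i^+\subset[0,1]^2$ by $\Omega_i^+=[(i-1)a,ia)\times[0,1]$ for $i\in\{1,\ldots,m\}$; $\Omega_i^+=[ma,1]\times[\frac{i-m-1}{m},\frac{i-m}{m})$ for $i\in\{m+1,\ldots,2m-1\}$; $\Omega_{2m}^+=[ma,1]\times[\frac{m-1}{m},1]$. Define $f_a\colon[0,1]^2\to[0,1]^2$ by $f_a(x,y)=(F_a(x),\frac{y}{m}+\frac{i-1}{m})$ on $\Omega_i^+$ for $i\le m$, and $f_a(x,y)=(F_a(x),my-i+m+1)$ on $\Omega_i^+$ for $i\ge m+1$. For $a,b\in(0,c_0)$ let $\Omega_i=\Omega_i^+\times[0,1]$ and define $f_{a,b}\colon[0,1]^3\to[0,1]^3$ by $f_{a,b}(x,y,z)=(f_a(x,y),(1-mb)z)$ on $\Omega_i$ for $i\le m$, and $f_{a,b}(x,y,z)=(f_a(x,y),bz+1-mb+b(i-m-1))$ on $\Omega_i$ for $i\ge m+1$; $f_{a,b}$ is a bijection of $[0,1]^3$. Let $X_a=\bigcap_{n\ge0}f_a^{-n}(\bigcup_{i=1}^{2m}\mathrm{int}(\Omega_i^+))$ and $X_{a,b}=\bigcap_{n\in\mathbb Z}f_{a,b}^{-n}(\bigcup_{i=1}^{2m}\mathrm{int}(\Omega_i))$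 (interiors in $\mathbb R^2$, $\mathbb R^3$). The coding map $\pi_a\colon X_a\to\{1,\ldots,2m\}^{\mathbb Z^+}$ sends $p$ to the unique $(\omega_n)$ with $f_a^n(p)\in\mathrm{int}(\Omega^+_{\omega_n})$ for all $n\ge0$; $\pi_{a,b}\colon X_{a,b}\to\{1,\ldots,2m\}^{\mathbb Z}$ sends $p$ to the unique $(\omega_n)$ with $f_{a,b}^n(p)\in\mathrm{int}(\Omega_{\omega_n})$ for all $n\in\mathbb Z$. Closures are taken in the product topologies. Dyck shift: $D=\{\alpha_1,\ldots,\alpha_m,\beta_1,\ldots,\beta_m\}$; consider the monoid with zero generated by $D$ and unit $1$ subject to $\alpha_i\cdot\beta_j=\delta_{i,j}$ (Kronecker delta), $0\cdot0=0$, $\gamma\cdot1=1\cdot\gamma=\gamma$, $\gamma\cdot 0=0\cdot\gamma=0$. For a finite word $\gamma_1\cdots\gamma_n$ over $D$ let $\mathrm{red}(\gamma_1\cdots\gamma_n)=\gamma_1\cdot\gamma_2\cdots\gamma_n$ in this monoid. Then $\Sigma_D^+=\{\omega\in D^{\mathbb Z^+}:\mathrm{red}(\omega_i\cdots\omega_j)\ne0\ \forall i<j\}$ and $\Sigma_D=\{\omega\in D^{\mathbb Z}:\mathrm{red}(\omega_i\cdots\omega_j)\neq0\ \forall i<j\}$. *)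

(* Defs.v *)
From HB Require Import structures.
From mathcomp Require Import all_boot all_order all_algebra.
From mathcomp Require Import all_classical all_reals all_analysis.

Set Implicit Arguments.
Unset Strict Implicit.
Unset Printing Implicit Defensive.

Import Order.TTheory GRing.Theory Num.Theory numFieldNormedType.Exports.
Local Open Scope classical_set_scope.
Local Open Scope ring_scope.

Section Dyn.
Variables (R : realType) (m : nat).

Definition OmegaP (a : R) (i : nat) : set (R * R) :=
  if ((1 <= i) && (i <= m))%N then
    [set p | (i.-1)%:R * a <= p.1 < i%:R * a /\ 0 <= p.2 <= 1]
  else if ((m.+1 <= i) && (i <= (2 * m).-1))%N then
    [set p | m%:R * a <= p.1 <= 1 /\
             (i - m.+1)%:R / m%:R <= p.2 < (i - m)%:R / m%:R]
  else if i == (2 * m)%N then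
    [set p | m%:R * a <= p.1 <= 1 /\ (m.-1)%:R / m%:R <= p.2 <= 1]
  else set0.

Definition Fbranch (a : R) (i : nat) (x : R) : R :=
  if (i <= m)%N then (x - (i.-1)%:R * a) / a
  else (x - m%:R * a) / (1 - m%:R * a).

Definition fa_branch (a : R) (i : nat) (p : R * R) : R * R :=
  (Fbranch a i p.1,
   if (i <= m)%N then p.2 / m%:R + (i.-1)%:R / m%:R
   else m%:R * p.2 - i%:R + m%:R + 1).

(* index i of the piece Omega_i^+ containing p (the pieces partition [0,1]^2) *)
Definition pieceP (a : R) (p : R * R) : nat := xget 0%N [set i | OmegaP a i p].

Definition f_a (a : R) (p : R * R) : R * R := fa_branch a (pieceP a p) p.

Definition UP (a : R) : set (R * R) :=
  \bigcup_(i in [set i : nat | (1 <= i <= 2 * m)%N]) interior (OmegaP a i).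

Definition X_a (a : R) : set (R * R) :=
  [set p | forall n : nat, UP a (iter n (f_a a) p)].

(* Symbols {1,...,2m} are encoded by 'I_(m+m): the ordinal k stands for k+1. *)
Definition HC_alph := discrete_topology 'I_(m + m).

Definition piX_a (a : R) : set {ptws nat -> HC_alph} :=
  [set w | exists p, X_a a p /\
     forall n : nat, interior (OmegaP a (w n).+1) (iter n (f_a a) p)].

Definition SigmaHC_plus (a : R) := closure (piX_a a).

Definition Omega3 (a : R) (i : nat) : set (R * R * R) :=
  [set p | OmegaP a i p.1 /\ 0 <= p.2 <= 1].

Definition piece3 (a : R) (p : R * R * R) : nat := xget 0%N [set i | Omega3 a i p].

Definition f_ab (a b : R) (p : R * R * R) : R * R * R :=
  let i := piece3 a p in
  (fa_branch a i p.1,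
   if (i <= m)%N then (1 - m%:R * b) * p.2
   else b * p.2 + 1 - m%:R * b + b * (i - m.+1)%:R).

Definition U3 (a : R) : set (R * R * R) :=
  \bigcup_(i in [set i : nat | (1 <= i <= 2 * m)%N]) interior (Omega3 a i).

(* X_{a,b} = \bigcap_{n in Z} f_{a,b}^{-n}(U): points with a full (two-sided)
   f_{a,b}-orbit staying in U. *)
Definition X_ab (a b : R) : set (R * R * R) :=
  [set p | exists q : int -> R * R * R,
     [/\ q 0 = p, forall n : int, q (n + 1) = f_ab a b (q n)
       & forall n : int, U3 a (q n)]].

Definition piX_ab (a b : R) : set {ptws int -> HC_alph} :=
  [set w | exists p, X_ab a b p /\
     exists q : int -> R * R * R,
     [/\ q 0 = p, forall n : int, q (n + 1) = f_ab a b (q n)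
       & forall n : int, interior (Omega3 a (w n).+1) (q n)]].

Definition SigmaHC (a b : R) := closure (piX_ab a b).

End Dyn.

Section Dyck.
Variable m : nat.

(* D = {alpha_1..alpha_m, beta_1..beta_m}: inl i = alpha_(i+1), inr i = beta_(i+1) *)
Definition Dletter := ('I_m + 'I_m)%type.
Definition D_alph := discrete_topology Dletter.

(* Elements of the Dyck monoid with zero: None = 0, Some s = the nonzero element
   with normal form (reversed word) s (normal forms: beta-word then alpha-word).
   Right multiplication by a generator, using alpha_i beta_j = delta_ij. *)
Definition dyck_step (x : option (seq Dletter)) (g : Dletter) :
    option (seq Dletter) :=
  match x with
  | None => None
  | Some s =>
      match g, s with
      | inr j, inl i :: s' => if i == j then Some s' else None
      | _, _ => Some (g :: s)
      end
  end.

Definition red (w : seq Dletter) : option (seq Dletter) :=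
  foldl dyck_step (Some [::]) w.

Definition SigmaD_plus : set {ptws nat -> D_alph} :=
  [set w | forall i j : nat, (i < j)%N ->
     red [seq w k | k <- iota i (j - i).+1] != None].

Definition SigmaD : set {ptws int -> D_alph} :=
  [set w | forall i j : int, i < j ->
     red [seq w (i + k%:Z) | k <- iota 0 (absz (j - i)).+1] != None].

Definition kappa (k : 'I_(m + m)) : Dletter := fintype.split k.

End Dyck.

Definition homeo_on {S T : topologicalType} (A : set S) (B : set T) (f : S -> T) :=
  [/\ set_bij A B f, {within A, continuous f} &
      exists g : T -> S, [/\ set_fun B A g, {within B, continuous g} &
                             forall y, B y -> f (g y) = y]].

(* Main.v *)
Require Import Defs.
From HB Require Import structures.
From mathcomp Require Import all_boot all_order all_algebra.
From mathcomp Require Import all_classical all_reals all_analysis.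
From mathcomp Require Import ring lra zify.
Import Order.TTheory GRing.Theory Num.Theory numFieldNormedType.Exports.
Local Open Scope classical_set_scope.
Local Open Scope ring_scope.
Set Implicit Arguments.
Unset Strict Implicit.
Unset Printing Implicit Defensive.
Section Comb.
Variable m : nat.
Local Notation DL := (Dletter m).

Definition stepS (st : seq 'I_m) (g : DL) : seq 'I_m :=
  match g with inl c => c :: st | inr _ => behead st end.

Fixpoint good (st : seq 'I_m) (u : seq DL) : bool :=
  match u with
  | [::] => true
  | inl c :: u' => good (c :: st) u'
  | inr j :: u' => (ohead st == Some j) && good (behead st) u'
  end.

Definition final st u := foldl stepS st u.

Fixpoint alphas (s : seq DL) : seq 'I_m :=
  match s with inl c :: s' => c :: alphas s' | _ => [::] end.
Fixpoint betas (s : seq DL) : seq 'I_m :=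
  match s with inl _ :: s' => betas s' | inr j :: s' => j :: betas s' | [::] => [::] end.

Lemma good_rcons st u g : good st (rcons u g) =
  good st u && (match g with inl _ => true | inr j => ohead (final st u) == Some j end).
Proof.
elim: u st => [|[c|j] u IH] st /=; first by case: g => //= j; rewrite andbT.
  by rewrite IH.
by rewrite IH andbA.
Qed.

Lemma good_cat st u1 u2 : good st (u1 ++ u2) = good st u1 && good (final st u1) u2.
Proof.
elim: u1 st => [|[c|j] u IH] st //=; by rewrite IH ?andbA.
Qed.

Lemma red_good u s : red u = Some s -> forall tail,
  good (rev (betas s) ++ tail) u /\ final (rev (betas s) ++ tail) u = alphas s ++ tail.
Proof.
elim/last_ind: u s => [|u g IH] s.
  by rewrite /red /= => -[<-] tail.
rewrite /red foldl_rcons -/(red u).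
case E: (red u) => [s0|] //= H tail.
rewrite good_rcons /final foldl_rcons -/(final _ u).
case: g H => [c|j] /=.
  move=> [<-] /=; have [-> ->] := IH _ E tail; by [].
case: s0 E => [|[c|j'] s0] E.
- move=> [<-] /=.
  have [-> ->] := IH _ E [:: j & tail]; by rewrite /= eqxx.
- case: eqP => // <- [<-].
  have [-> ->] := IH _ E tail; by rewrite /= eqxx.
- move=> [<-] /=; rewrite rev_cons -cats1 -catA /=.
  have [-> ->] := IH _ E [:: j & tail]; by rewrite /= eqxx.
Qed.
End Comb.
Lemma nbhs_ltc (R : realType) (y c : R) (B : set R) : nbhs y B -> (forall t, B t -> t <= c) -> y < c.
Proof.
move=> hB hc.
have [t [Bt yt]] : exists t, B t /\ y < t.
  apply: (@filter_ex _ (y^'+)).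
  near=> t; split; last by near: t; exact: nbhs_right_gt.
  by near: t; apply: filterS hB => t Bt _.
by apply: lt_le_trans yt (hc _ Bt).
Unshelve. all: by end_near. Qed.
Lemma nbhs_gtc (R : realType) (y c : R) (B : set R) : nbhs y B -> (forall t, B t -> c <= t) -> c < y.
Proof.
move=> hB hc.
have [t [Bt yt]] : exists t, B t /\ t < y.
  apply: (@filter_ex _ (y^'-)).
  near=> t; split; last by near: t; exact: nbhs_left_lt.
  by near: t; apply: filterS hB => t Bt _.
by apply: le_lt_trans (hc _ Bt) yt.
Unshelve. all: by end_near. Qed.
Lemma nbhs_itv (R : realType) (l u x : R) : l < x < u -> nbhs x [set t | l < t < u].
Proof.
case/andP => h1 h2; near=> t; apply/andP; split.
  by near: t; exact: lt_nbhsr.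
by near: t; exact: lt_nbhsl.
Unshelve. all: by end_near. Qed.
Section RealA.
Variables (R : realType) (m : nat).
Hypothesis m0 : (0 < m)%N.
Local Notation DL := (Dletter m).

Definition pushes (st : seq 'I_m) (z : R) : R :=
  foldr (fun (d : 'I_m) acc => (d%:R + acc) / m%:R) z st.

Lemma mgt0 : 0 < m%:R :> R.
Proof. by rewrite ltr0n. Qed.

Lemma pushes_in st z : 0 < z < 1 -> 0 < pushes st z < 1.
Proof.
move=> hz; elim: st => [|d st IH] //=.
have hM := mgt0; have hd : (d%:R : R) + 1 <= m%:R by rewrite natr1 ler_nat ltn_ord.
have hd0 : 0 <= (d%:R : R) by [].
case/andP: IH => h1 h2.
apply/andP; split; first by apply: divr_gt0 => //; lra.
by rewrite ltr_pdivrMr //; lra.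
Qed.

Lemma A_core (y : nat -> R) (w : nat -> DL) :
  (forall n, 0 < y n < 1) ->
  (forall n c, w n = inl c -> y n.+1 = (y n + (c : nat)%:R) / m%:R) ->
  (forall n j, w n = inr j -> (j : nat)%:R / m%:R <= y n < (j : nat).+1%:R / m%:R
                               /\ y n.+1 = y n * m%:R - (j : nat)%:R) ->
  forall L, exists s, red [seq w k | k <- iota 0 L] = Some s /\
     exists z, 0 < z < 1 /\ y L = pushes (alphas s) z.
Proof.
move=> H0 Ha Hb; elim=> [|L [s [Hs [z [hz Hz]]]]].
  by exists [::]; split => //; exists (y 0); split.
rewrite -addn1 iotaD map_cat /= cats1 /red foldl_rcons -/(red _) Hs add0n.
case E: (w L) => [c|j] /=.
  exists (inl c :: s); split => //; exists z; split => //.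
  by rewrite addn1 (Ha _ _ E) Hz /= addrC.
have [hs hy] := Hb _ _ E.
case: s Hs Hz => [|[c|j'] s0] Hs Hz.
- exists [:: inr j]; split => //; exists (y L.+1); split; [exact: H0|by rewrite addn1].
- have hP := pushes_in (alphas s0) hz.
  move: Hz; rewrite /= => Hz.
  have hM := mgt0.
  move: hs; rewrite Hz => /andP[h1 h2].
  have [hc1 hc2] : (j : nat)%:R <= (c : nat)%:R + pushes (alphas s0) z /\
                   (c : nat)%:R + pushes (alphas s0) z < (j : nat).+1%:R.
    split.
      by move: h1; rewrite ler_pM2r ?invr_gt0 // addrC.
    by move: h2; rewrite ltr_pM2r ?invr_gt0 // addrC.
  have cj : c = j.
    apply/val_inj/eqP; rewrite eqn_leq.
    case/andP: hP => p1 p2.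
    have : ((c : nat)%:R : R) < (j : nat).+1%:R by lra.
    have : ((j : nat)%:R : R) < (c : nat).+1%:R by rewrite -natr1; lra.
    by rewrite !ltr_nat !ltnS => -> ->.
  subst c; rewrite eqxx; exists s0; split => //; exists z; split => //.
  rewrite addn1 hy Hz /=. field; exact: lt0r_neq0.
- exists [:: inr j, inr j' & s0]; split => //; exists (y L.+1); split; [exact: H0|by rewrite addn1].
Qed.
End RealA.
Section Geo.
Variables (R : realType) (m : nat) (a : R).
Hypothesis hm : (2 <= m)%N.
Hypothesis ha : 0 < a < m%:R^-1.

Lemma m0' : (0 < m)%N. Proof. by apply: leq_trans hm. Qed.
Lemma mpos : 0 < m%:R :> R. Proof. by rewrite ltr0n m0'. Qed.
Lemma apos : 0 < a. Proof. by case/andP: ha. Qed.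
Lemma ma1 : m%:R * a < 1.
Proof. case/andP: ha => _ h; have hM := mpos.
have : m%:R * a < m%:R * m%:R^-1 by rewrite ltr_pM2l.
by rewrite mulfV // lt0r_neq0. Qed.

Lemma le_strip (c x : R) (k1 k2 : nat) : 0 < c ->
  k1%:R * c <= x -> x < k2.+1%:R * c -> (k1 <= k2)%N.
Proof.
move=> hc h1 h2; have : k1%:R * c < k2.+1%:R * c by apply: le_lt_trans h2.
by rewrite ltr_pM2r // ltr_nat ltnS.
Qed.

Lemma OmegaP_bounds i p : OmegaP m a i p ->
  [/\ (1 <= i <= m)%N, (i.-1)%:R * a <= p.1 & p.1 < (i.-1).+1%:R * a] \/
  [/\ (m < i <= 2 * m)%N, m%:R * a <= p.1, (i - m.+1)%:R * m%:R^-1 <= p.2 &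
      ((i < 2 * m)%N -> p.2 < (i - m.+1).+1%:R * m%:R^-1)].
Proof.
rewrite /OmegaP; case: ifP => [/andP[i1 im]|_].
  move=> /= [/andP[h1 h2] _]; left; split => //; by rewrite ?i1 ?prednK.
case: ifP => [/andP[i1 im]|_].
  move=> /= [/andP[h1 _] /andP[h3 h4]]; right; split => //.
  - by rewrite i1 /=; lia.
  - move=> _; have -> : (i - m.+1).+1 = (i - m)%N by lia.
    by [].
case: ifP => // /eqP -> /= [/andP[h1 _] /andP[h3 _]]; right; split => //.
- by rewrite leqnn andbT; lia.
- have -> : (2 * m - m.+1 = m.-1)%N by lia. by [].
- by rewrite ltnn.
Qed.

Lemma OmegaP_uniq i j p : OmegaP m a i p -> OmegaP m a j p -> i = j.
Proof.
have ha0 := apos; have hmi : 0 < m%:R^-1 :> R by rewrite invr_gt0 mpos.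
case/OmegaP_bounds => [[hi h1 h2]|[hi h1 h2 h3]];
case/OmegaP_bounds => [[hj k1 k2]|[hj k1 k2 k3]].
- have := le_strip ha0 h1 k2; have := le_strip ha0 k1 h2; lia.
- have := le_strip ha0 k1 h2; lia.
- have := le_strip ha0 h1 k2; lia.
- have [ei|ei] := ltnP i (2 * m); have [ej|ej] := ltnP j (2 * m).
  + have := le_strip hmi h2 (k3 ej); have := le_strip hmi k2 (h3 ei); lia.
  + have := le_strip hmi k2 (h3 ei); lia.
  + have := le_strip hmi h2 (k3 ej); lia.
  + lia.
Qed.
End Geo.
Section Geo2.
Variables (R : realType) (m : nat) (a : R).
Hypothesis hm : (2 <= m)%N.
Hypothesis ha : 0 < a < m%:R^-1.

Lemma OmegaP_y i q : OmegaP m a i q -> 0 <= q.2 <= 1.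
Proof.
rewrite /OmegaP; case: ifP => _; first by move=> [].
have hM := mpos R hm.
case: ifP => [/andP[i1 i2]|_].
  move=> [_ /andP[h1 h2]]; apply/andP; split.
    by apply: le_trans h1; rewrite divr_ge0.
  apply/ltW/(lt_le_trans h2); rewrite ler_pdivrMr // mul1r ler_nat; lia.
case: ifP => // _ [_ /andP[h1 h2]]; apply/andP; split => //.
by apply: le_trans h1; rewrite divr_ge0.
Qed.

Lemma interior_prod (T U : topologicalType) (A : set (T * U)) p :
  interior A p -> exists B C, [/\ nbhs p.1 B, nbhs p.2 C & B `*` C `<=` A].
Proof. by case=> -[B C] /= [hB hC] sub; exists B, C. Qed.

Lemma OmegaP_int_y i q : interior (OmegaP m a i) q -> 0 < q.2 < 1.
Proof.
case/interior_prod => B [C [hB hC sub]].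
have B1 : B q.1 := nbhs_singleton hB.
have hy t : C t -> 0 <= t <= 1.
  by move=> Ct; have /OmegaP_y := sub (q.1, t) (conj B1 Ct).
apply/andP; split.
  by apply: (nbhs_gtc hC) => t /hy /andP[].
by apply: (nbhs_ltc hC) => t /hy /andP[].
Qed.

Lemma Omega3_int i q : interior (Omega3 m a i) q -> interior (OmegaP m a i) q.1.
Proof.
case/interior_prod => B [C [hB hC sub]].
have C1 : C q.2 := nbhs_singleton hC.
apply: filterS hB => x Bx; exact: (sub (x, q.2) (conj Bx C1)).1.
Qed.

Lemma Omega3_int_z i q : interior (Omega3 m a i) q -> 0 < q.2 < 1.
Proof.
case/interior_prod => B [C [hB hC sub]].
have B1 : B q.1 := nbhs_singleton hB.
have hy t : C t -> 0 <= t <= 1 by move=> Ct; have [] := sub (q.1, t) (conj B1 Ct).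
apply/andP; split.
  by apply: (nbhs_gtc hC) => t /hy /andP[].
by apply: (nbhs_ltc hC) => t /hy /andP[].
Qed.

Lemma Omega3_int_intro i p z : interior (OmegaP m a i) p -> 0 < z < 1 ->
  interior (Omega3 m a i) (p, z).
Proof.
move=> hp hz; exists (OmegaP m a i, [set t | 0 < t < 1]) => /=.
  by split => //; exact: nbhs_itv.
move=> [q t] /= [h1 /andP[h2 h3]]; split => //; apply/andP; split; exact: ltW.
Qed.

Lemma OmegaP_int_alpha (c : nat) p : (c < m)%N ->
  c%:R * a < p.1 < c.+1%:R * a -> 0 < p.2 < 1 -> interior (OmegaP m a c.+1) p.
Proof.
move=> cm hx hy; exists ([set t | c%:R * a < t < c.+1%:R * a], [set t | 0 < t < 1]) => /=.
  by split; exact: nbhs_itv.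
move=> [x y] /= [/andP[h1 h2] /andP[h3 h4]].
rewrite /OmegaP /= cm /=; split; apply/andP; split => //; exact: ltW.
Qed.

Lemma OmegaP_int_beta (j : nat) p : (j < m)%N ->
  m%:R * a < p.1 < 1 -> j%:R / m%:R < p.2 < j.+1%:R / m%:R ->
  interior (OmegaP m a (m + j).+1) p.
Proof.
move=> jm hx hy; exists ([set t | m%:R * a < t < 1], [set t | j%:R / m%:R < t < j.+1%:R / m%:R]) => /=.
  by split; exact: nbhs_itv.
move=> [x y] /= [/andP[h1 h2] /andP[h3 h4]].
rewrite /OmegaP /=.
have -> : ((m + j) < m)%N = false by lia.
rewrite ?andbF /=.
case: ifP => [/andP[i1 i2]|i3].
  have -> : ((m + j).+1 - m.+1 = j)%N by lia.
  have -> : ((m + j).+1 - m = j.+1)%N by lia.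
  by split; apply/andP; split => //; apply: ltW.
have jm1 : j = m.-1 by lia.
have -> : ((m + j).+1 == 2 * m)%N by apply/eqP; lia.
split; apply/andP; split; try exact: ltW.
  by rewrite -jm1 ltW.
apply: ltW; apply: (lt_le_trans h4).
rewrite jm1 prednK ?(m0' hm) // divff // lt0r_neq0 // (mpos R hm).
all: done.
Qed.

Lemma pieceP_eq i p : OmegaP m a i p -> pieceP m a p = i.
Proof.
move=> h; rewrite /pieceP.
have := @xgetI _ 0%N [set i | OmegaP m a i p] i h.
by move=> /(OmegaP_uniq hm ha h).
Qed.

Lemma f_a_eq i p : OmegaP m a i p -> f_a m a p = fa_branch m a i p.
Proof. by move=> h; rewrite /f_a (pieceP_eq h). Qed.

Lemma piece3_eq i p : Omega3 m a i p -> piece3 m a p = i.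
Proof.
move=> h; rewrite /piece3.
have := @xgetI _ 0%N [set i | Omega3 m a i p] i h.
by move=> /= [h1 _]; apply/esym/(OmegaP_uniq hm ha h.1 h1).
Qed.

Lemma f_ab_eq b i p : Omega3 m a i p -> f_ab m a b p =
  (fa_branch m a i p.1, if (i <= m)%N then (1 - m%:R * b) * p.2
   else b * p.2 + 1 - m%:R * b + b * (i - m.+1)%:R).
Proof. by move=> h; rewrite /f_ab (piece3_eq h). Qed.
End Geo2.
Section DirA.
Variables (R : realType) (m : nat) (a : R).
Hypothesis hm : (2 <= m)%N.
Hypothesis ha : 0 < a < m%:R^-1.

Lemma coding_red (P : nat -> R * R) (sym : nat -> 'I_(m + m)) :
  (forall n, interior (OmegaP m a (sym n).+1) (P n)) ->
  (forall n, P n.+1 = fa_branch m a (sym n).+1 (P n)) ->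
  forall L, red [seq kappa (sym k) | k <- iota 0 L] != None.
Proof.
move=> Hi Hr L.
have hM := mpos R hm.
have [||| s [-> _]] := @A_core R m (m0' hm) (fun n => (P n).2) (fun n => kappa (sym n)) _ _ _ L => //.
- by move=> n; exact: OmegaP_int_y (Hi n).
- move=> n c; rewrite /kappa Hr; case: splitP => // c' e [ec]; subst c'.
  rewrite /fa_branch /= e ltn_ord /= mulrDl.
  by [].
- move=> n j; rewrite /kappa Hr; case: splitP => // j' e [ej]; subst j'.
  have hin := Hi n.
  have hy := OmegaP_int_y hm ha hin.
  have := OmegaP_bounds hm ha (interior_subset hin).
  rewrite /fa_branch /= e.
  have -> : (m + j < m)%N = false by lia.
  move=> [[h1 h2 h3]|[h1 h2 h3 h4]]; first by lia.
  have E : ((m + j).+1 - m.+1 = j)%N by lia.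
  rewrite E in h3 h4.
  split; last by rewrite -[(m + j).+1]addn1 !natrD; ring.
  apply/andP; split => //.
  have [lt2|ge2] := ltnP (m + j).+1 (2 * m); first exact: h4.
  have -> : j.+1 = m by have := ltn_ord j; lia.
  by rewrite mulfV ?lt0r_neq0 //; case/andP: hy.
Qed.
End DirA.
Section DirA2.
Variables (R : realType) (m : nat).
Hypothesis hm : (2 <= m)%N.

Lemma A_plus (a : R) (ha : 0 < a < m%:R^-1) (p : R * R) (w : nat -> 'I_(m + m)) :
  (forall n, interior (OmegaP m a (w n).+1) (iter n (f_a m a) p)) ->
  @SigmaD_plus m (fun n => kappa (w n)).
Proof.
move=> Hi i j ij.
rewrite -{1}(addn0 i) iotaDl -map_comp.
apply: (@coding_red R m a hm ha (fun k => iter (i + k) (f_a m a) p) (fun k => w (i + k)%N)).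
  by move=> n; exact: Hi.
move=> n /=; rewrite addnS iterS.
exact: f_a_eq hm ha _ _ (interior_subset (Hi _)).
Qed.

Lemma A_two (a b : R) (ha : 0 < a < m%:R^-1) (w : int -> 'I_(m + m)) (q : int -> R * R * R) :
  (forall n, q (n + 1) = f_ab m a b (q n)) ->
  (forall n, interior (Omega3 m a (w n).+1) (q n)) ->
  @SigmaD m (fun n => kappa (w n)).
Proof.
move=> Hq Hi i j ij.
apply: (@coding_red R m a hm ha (fun k => (q (i + k%:Z)).1) (fun k => w (i + k%:Z))).
  by move=> n; exact: Omega3_int (Hi _).
move=> n /=; rewrite -addn1 PoszD addrA Hq.
by rewrite (f_ab_eq hm ha b (interior_subset (Hi _))).
Qed.
End DirA2.
Lemma kappa_cases m (k : 'I_(m + m)) :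
  (exists c : 'I_m, (k : nat) = c /\ kappa k = inl c) \/
  (exists j : 'I_m, (k : nat) = (m + j)%N /\ kappa k = inr j).
Proof. by rewrite /kappa; case: splitP => c e; [left|right]; exists c. Qed.

Section Orbit2.
Variables (R : realType) (m : nat) (a : R).
Hypothesis hm : (2 <= m)%N.
Hypothesis ha : 0 < a < m%:R^-1.

Definition Gb (k : 'I_(m + m)) (x : R) : R :=
  if (k < m)%N then a * (x + (k : nat)%:R) else m%:R * a + (1 - m%:R * a) * x.

Definition xstar : R := a / (1 - a).

Lemma a_half : a < 2^-1.
Proof.
case/andP: ha => _ h; apply: (lt_le_trans h).
rewrite lef_pV2 ?posrE ?ltr0n ?(m0' hm) // ler_nat //.
Qed.

Lemma xstar_in : a < xstar < 2%:R * a.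
Proof.
have a0 := apos ha; have a2 := a_half.
have h1a : 0 < 1 - a by lra.
rewrite /xstar; apply/andP; split.
  by rewrite ltr_pdivlMr //; nra.
by rewrite ltr_pdivrMr //; nra.
Qed.

Lemma Gb_in (k : 'I_(m + m)) (x : R) : 0 < x < 1 ->
  if (k < m)%N then (k : nat)%:R * a < Gb k x < (k : nat).+1%:R * a
  else m%:R * a < Gb k x < 1.
Proof.
move=> /andP[x0 x1]; have a0 := apos ha; have ma := ma1 hm ha.
have p1 : 0 < a * x by rewrite mulr_gt0.
have p2 : 0 < a * (1 - x) by rewrite mulr_gt0 // subr_gt0.
have ma0 : 0 < 1 - m%:R * a by rewrite subr_gt0.
have p3 : 0 < (1 - m%:R * a) * x by rewrite mulr_gt0.
have p4 : 0 < (1 - m%:R * a) * (1 - x) by rewrite mulr_gt0 // subr_gt0.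
rewrite /Gb; case: (k < m)%N.
  rewrite -natr1; apply/andP; split.
    rewrite mulrDr (mulrC a); lra.
  rewrite mulrDr (mulrC a); move: p2; rewrite mulrBr mulr1; lra.
apply/andP; split; first lra.
move: p4; rewrite mulrBr mulr1; lra.
Qed.

Lemma Gb_01 (k : 'I_(m + m)) (x : R) : 0 < x < 1 -> 0 < Gb k x < 1.
Proof.
move=> hx; have := Gb_in k hx; have a0 := apos ha; have ma := ma1 hm ha.
case: ifP => km /andP[h1 h2]; apply/andP; split.
- by apply: le_lt_trans h1; rewrite mulr_ge0 // ltW.
- apply: (lt_le_trans h2); apply: le_trans (ltW ma).
  by rewrite ler_pM2r // ler_nat.
- by apply: le_lt_trans h1; rewrite mulr_ge0 // ltW // ltr0n (m0' hm).
- by [].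
Qed.

Lemma Fbranch_Gb (k : 'I_(m + m)) (x : R) : Fbranch m a (k : nat).+1 (Gb k x) = x.
Proof.
have a0 := apos ha; have ma := ma1 hm ha.
rewrite /Fbranch /Gb; case: (boolP (k < m)%N) => km; rewrite ?(negbTE km) ?km /=.
  by field; rewrite lt0r_neq0.
by field; rewrite subr_eq0 gt_eqF.
Qed.

Lemma Fbranch_xstar : Fbranch m a 2 xstar = xstar.
Proof.
have a0 := apos ha; have a2 := a_half.
rewrite /Fbranch hm /xstar /=.
field; apply/andP; split; apply: lt0r_neq0; lra.
Qed.

Variables (v : nat -> 'I_(m + m)) (L : nat) (st0 : seq 'I_m).
Hypothesis vtail : forall n, (L <= n)%N -> (v n : nat) = 1%N.
Hypothesis vgood : good st0 [seq kappa (v i) | i <- iota 0 L].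

Definition xs n := foldr Gb xstar [seq v i | i <- iota n (L - n)].
Definition stk n := final st0 [seq kappa (v i) | i <- iota 0 n].
Definition ys n : R := pushes (stk n) 2^-1.

Lemma xs_lt n : (n < L)%N -> xs n = Gb (v n) (xs n.+1).
Proof.
move=> nL; rewrite /xs.
have -> : (L - n = (L - n.+1).+1)%N by lia.
by [].
Qed.

Lemma xs_ge n : (L <= n)%N -> xs n = xstar.
Proof. by move=> nL; rewrite /xs (_ : L - n = 0)%N //; lia. Qed.

Lemma xs01 n : 0 < xs n < 1.
Proof.
have a0 := apos ha; have a2 := a_half.
have xs1 : 0 < xstar < 1 by have := xstar_in; lra.
move: {2}(L - n)%N (erefl (L - n)%N) => d; elim: d n => [|d IH] n e.
  by rewrite xs_ge //; lia.
rewrite xs_lt; last by lia.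
apply: Gb_01; apply: IH; lia.
Qed.

Lemma stkS n : stk n.+1 = stepS (stk n) (kappa (v n)).
Proof. by rewrite /stk -addn1 iotaD map_cat /final foldl_cat. Qed.

Lemma stk_head n (j : 'I_m) : (n < L)%N -> kappa (v n) = inr j -> ohead (stk n) = Some j.
Proof.
move=> nL e; move: vgood.
have -> : L = (n + (L - n).-1.+1)%N by lia.
rewrite iotaD map_cat good_cat /= e => /andP[_ /andP[/eqP h _]].
exact: h.
Qed.

Lemma ys01 n : 0 < ys n < 1.
Proof. apply: (pushes_in (m0' hm)); apply/andP; split; first by rewrite invr_gt0. by rewrite invf_lt1 // ltr1n. Qed.

Lemma orbit_step n : interior (OmegaP m a (v n).+1) (xs n, ys n) /\
  fa_branch m a (v n).+1 (xs n, ys n) = (xs n.+1, ys n.+1).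
Proof.
have a0 := apos ha; have hM := mpos R hm.
have hy := ys01 n.
have [nL|nL] := ltnP n L.
  have hx := xs01 n.+1.
  have hG := Gb_in (v n) hx.
  rewrite (xs_lt nL).
  case: (kappa_cases (v n)) => [[c [e ek]]|[j [e ek]]].
  - move: hG; rewrite e ltn_ord => hG; split.
      by apply: OmegaP_int_alpha.
    have Fb := Fbranch_Gb (v n) (xs n.+1); rewrite e in Fb.
    rewrite /fa_branch /= Fb ltn_ord /ys stkS ek /=.
    by congr pair; rewrite mulrDl addrC.
  - move: hG; rewrite e (_ : (m + j < m)%N = false); last by lia.
    move=> hG.
    have hs := stk_head nL ek.
    case E: (stk n) hs => [|j' s'] //= [ej]; subst j'.
    have hp : 0 < pushes s' (2^-1 : R) < 1.
      apply: (pushes_in (m0' hm)); apply/andP; split; first by rewrite invr_gt0.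
      by rewrite invf_lt1 // ltr1n.
    have hys : ys n = ((j : nat)%:R + pushes s' 2^-1) / m%:R by rewrite /ys E.
    have hys1 : ys n.+1 = pushes s' 2^-1 by rewrite /ys stkS ek /= E.
    split.
      apply: OmegaP_int_beta => //.
      rewrite hys; case/andP: hp => hp1 hp2; apply/andP; split.
        by rewrite ltr_pM2r ?invr_gt0 //; lra.
      by rewrite ltr_pM2r ?invr_gt0 // -natr1; lra.
    have Fb := Fbranch_Gb (v n) (xs n.+1); rewrite e in Fb; rewrite /fa_branch /= Fb.
    rewrite (_ : ((m + j).+1 <= m)%N = false); last by lia.
    congr pair; rewrite hys1 hys -[(m + j).+1]addn1 !natrD.
    by field; rewrite lt0r_neq0.
have vn1 := vtail nL.
have hv : (1 < m)%N := hm.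
rewrite (xs_ge nL) (xs_ge (leqW nL)).
have hx := xstar_in.
case: (kappa_cases (v n)) => [[c [e ek]]|[j [e ek]]]; last by move: e; rewrite vn1; lia.
have c1 : (c : nat) = 1%N by rewrite -e.
split.
  rewrite vn1; apply: (@OmegaP_int_alpha R m a 1%N) => //.
  by rewrite mul1r.
rewrite /fa_branch /= vn1 Fbranch_xstar /= hm /ys stkS ek /= c1.
by congr pair; rewrite mulrDl addrC.
Qed.

Lemma orbit_all n : iter n (f_a m a) (xs 0, ys 0) = (xs n, ys n) /\
  interior (OmegaP m a (v n).+1) (xs n, ys n).
Proof.
elim: n => [|n [IH1 IH2]]; first by split => //; have [] := orbit_step 0.
have [h1 h2] := orbit_step n.
have [_ h3] := orbit_step n.+1.
split.
  by rewrite /= IH1 (f_a_eq hm ha (interior_subset h1)) h2.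
exact: (orbit_step n.+1).1.
Qed.
End Orbit2.

Section Topo.
Variable I : choiceType.
Lemma nbhs_coord (T : choiceType) (x : {ptws I -> discrete_topology T}) (t : I) :
  nbhs x [set w | w t = x t].
Proof.
have := @proj_continuous I (fun _ => discrete_topology T) t x.
by move=> /(_ _ (discrete_set1 (x t))).
Qed.
Lemma ptws_cvg (T : choiceType) (F : set_system {ptws I -> discrete_topology T}) (f : {ptws I -> discrete_topology T}) :
  Filter F -> (forall t, F [set w | w t = f t]) -> F --> f.
Proof.
move=> FF H.
have := @pointwise_cvgP (discrete_topology I) (discrete_topology T) F f FF.
move=> [_ H2]; apply: H2 => t; apply/discrete_cvg; exact: H.
Qed.
Lemma cont_map (T1 T2 : choiceType) (g : T1 -> T2) :
  continuous (fun w : {ptws I -> discrete_topology T1} =>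
     ((fun n => g (w n)) : {ptws I -> discrete_topology T2})).
Proof.
move=> x.
pose P := (fun w : {ptws I -> discrete_topology T1} =>
     ((fun n => g (w n)) : {ptws I -> discrete_topology T2})).
have Fx : Filter (nbhs x) := nbhs_pfilter x.
have FF : Filter (P @ x) := fmap_filter P Fx.
have H : forall t, (P @ x) [set w | w t = P x t].
  by move=> t; apply: (@filterS _ _ Fx _ _ _ (nbhs_coord x t)) => w /= wt; rewrite /P wt.
have := @ptws_cvg T2 (P @ x) (P x) FF H.
exact.
Qed.
End Topo.

Lemma homeo_gen (I : choiceType) m (S : set {ptws I -> HC_alph m})
    (D : set {ptws I -> D_alph m}) :
  (forall w, S w -> D (fun n => kappa (w n))) -> closed D ->
  (forall y, D y -> closure S (fun n => unsplit (y n))) ->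
  homeo_on (closure S) D
    (fun (w : {ptws I -> HC_alph m}) (n : I) => @kappa m (w n) : D_alph m).
Proof.
move=> hSD hD hDS.
have cP := @cont_map I _ _ (@kappa m).
have cQ := @cont_map I _ _ (@unsplit m m).
split; [split| |].
- move=> x Sx; apply: hD => B hB.
  have hB' := cP x B hB.
  have [s [Ss Bs]] := Sx _ hB'.
  by exists (fun n => kappa (s n)); split => //; apply: hSD.
- move=> x y _ _ /= exy; apply/funext => n.
  have := congr1 (fun f => f n) exy => /= /(congr1 unsplit).
  by rewrite /kappa !splitK.
- move=> y Dy; exists (fun n => unsplit (y n)); first exact: hDS.
  by apply/funext => n /=; rewrite /kappa unsplitK.
- exact: continuous_subspaceT.
- exists (fun (y : {ptws I -> D_alph m}) n => (unsplit (y n) : HC_alph m)); split.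
  + by move=> y Dy; apply: hDS.
  + exact: continuous_subspaceT.
  + by move=> y _; apply/funext => n /=; rewrite /kappa unsplitK.
Qed.


Lemma closure_win (I : choiceType) m (S : set {ptws I -> HC_alph m})
    (u : {ptws I -> HC_alph m}) (win : nat -> I -> Prop) :
  (forall t, \forall N \near \oo, win N t) ->
  (forall N, exists s, S s /\ forall t, win N t -> s t = u t) ->
  closure S u.
Proof.
move=> hwin hs.
have [s hs'] := choice hs.
have Fs : Filter (s @ \oo) := fmap_filter s eventually_filter.
have hc : s @ \oo --> u.
  apply: (@ptws_cvg I _ _ _ Fs) => t.
  by apply: filterS (hwin t) => N /(hs' N).2.
have hn : \forall n \near \oo, closure S (s n).
  by apply: nearW => N; apply: subset_closure; case: (hs' N).
exact: (@closed_cvg nat _ \oo eventually_filter s (closure S) (@closed_closure _ S) hn u hc).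
Qed.

Lemma nbhs_window (I : choiceType) (T : choiceType) (x : {ptws I -> discrete_topology T})
  (s : seq I) : nbhs x [set w | forall i, i \in s -> w i = x i].
Proof.
have Fx : Filter (nbhs x) := nbhs_pfilter x.
elim: s => [|i s IH]; first by exact: (@nearW _ (nbhs x) _ Fx (fun w i (hi : i \in [::]) => False_ind _ (notF hi))).
apply: (@filterS _ _ Fx _ _ _ (@filterI _ _ Fx _ _ (nbhs_coord x i) IH)) => w [h1 h2] j.
by rewrite inE => /orP[/eqP->|/h2].
Qed.

Lemma closed_SigmaD_plus m : closed (@SigmaD_plus m).
Proof.
move=> w cw i j ij.
have [w' [Dw' hw']] := cw _ (nbhs_window w (iota i (j - i).+1)).
have := Dw' i j ij.
have e : [seq w' k | k <- iota i (j - i).+1] = [seq w k | k <- iota i (j - i).+1].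
  by apply/eq_in_map => k /hw'.
by rewrite e.
Qed.

Lemma closed_SigmaD m : closed (@SigmaD m).
Proof.
move=> w cw i j ij.
have [w' [Dw' hw']] := cw _ (nbhs_window w [seq i + k%:Z | k <- iota 0 (absz (j - i)).+1]).
have := Dw' i j ij.
have e : [seq w' (i + k%:Z) | k <- iota 0 (absz (j - i)).+1] =
          [seq w (i + k%:Z) | k <- iota 0 (absz (j - i)).+1].
  by apply/eq_in_map => k hk; apply: hw'; exact: (map_f (fun k : nat => i + k%:Z) hk).
by rewrite e.
Qed.

Section B1.
Variables (R : realType) (m : nat) (a : R).
Hypothesis hm : (2 <= m)%N.
Hypothesis ha : 0 < a < m%:R^-1.

Lemma lt1mm : (1 < m + m)%N. Proof. by lia. Qed.
Definition o1 : 'I_(m + m) := Ordinal lt1mm.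

Lemma B_plus (y : {ptws nat -> D_alph m}) : SigmaD_plus y ->
  closure (@piX_a R m a) (fun n => (unsplit (y n) : HC_alph m)).
Proof.
move=> Dy.
apply: (closure_win (win := fun N t => (t <= N)%N)).
  by move=> t; exact: nbhs_infty_ge.
move=> N.
pose L := N.+2.
pose v n := if (n < L)%N then (unsplit (y n) : 'I_(m + m)) else o1.
have vtail n : (L <= n)%N -> (v n : nat) = 1%N.
  by move=> h; rewrite /v ltnNge h.
have hw : [seq kappa (v i) | i <- iota 0 L] = [seq y i | i <- iota 0 L].
  apply/eq_in_map => i; rewrite mem_iota add0n => hi.
  by move: hi => /andP[_ hi]; rewrite /v hi /kappa unsplitK.
have := Dy 0%N N.+1 (ltn0Sn _); rewrite subn0 -/L -hw.
case E: (red _) => [s|] // _.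
have [hg _] := red_good E [::].
pose st0 := rev (betas s) ++ [::].
exists v; split; last by move=> t tN; rewrite /v ifT //; lia.
exists (xs a v L 0, ys R v st0 0); split.
  move=> n; exists (v n).+1; first by rewrite /=; have := ltn_ord (v n); lia.
  by have [-> h] := orbit_all hm ha vtail hg n.
by move=> n; have [-> h] := orbit_all hm ha vtail hg n.
Qed.
End B1.

Section B2.
Variables (R : realType) (m : nat) (a b : R).
Hypothesis hm : (2 <= m)%N.
Hypothesis ha : 0 < a < m%:R^-1.
Hypothesis hb : 0 < b < m%:R^-1.

Lemma ltmmm : (m < m + m)%N. Proof. by lia. Qed.
Definition bet0 : 'I_(m + m) := Ordinal ltmmm.
Definition zstar : R := (1 - m%:R * b) / (1 - b).

Lemma mb1 : m%:R * b < 1. Proof. exact: (ma1 hm hb). Qed.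

Lemma zstar_in : 0 < zstar < 1.
Proof.
have b0 := apos hb; have mb := mb1; have hM := mpos R hm.
have m2 : (2 : R) <= m%:R by rewrite ler_nat.
have b1 : b < 1 by nra.
rewrite /zstar; apply/andP; split.
  by apply: divr_gt0; lra.
by rewrite ltr_pdivrMr ?subr_gt0 //; nra.
Qed.

Lemma zstar_fix : b * zstar + 1 - m%:R * b + b * ((bet0 : nat).+1 - m.+1)%:R = zstar.
Proof.
have b0 := apos hb; have mb := mb1; have hM := mpos R hm.
have m2 : (2 : R) <= m%:R by rewrite ler_nat.
have b1 : b < 1 by nra.
rewrite /= subnn mulr0 addr0 /zstar.
by field; apply: lt0r_neq0; lra.
Qed.

Lemma fz_in (i : nat) (z : R) : 0 < z < 1 -> (1 <= i <= 2 * m)%N ->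
  0 < (if (i <= m)%N then (1 - m%:R * b) * z
       else b * z + 1 - m%:R * b + b * (i - m.+1)%:R) < 1.
Proof.
move=> /andP[z0 z1] hi; have b0 := apos hb; have mb := mb1; have hM := mpos R hm.
case: ifP => im.
  have p1 : 0 < (1 - m%:R * b) * z by rewrite mulr_gt0 // subr_gt0.
  have p2 : 0 < m%:R * b * z by rewrite !mulr_gt0.
  apply/andP; split => //; move: p2; rewrite mulrBl mul1r; lra.
have hj : ((i - m.+1)%:R : R) + 1 <= m%:R by rewrite natr1 ler_nat; lia.
have hj0 : 0 <= ((i - m.+1)%:R : R) by [].
have p1 : 0 < b * (1 - z) by rewrite mulr_gt0 // subr_gt0.
have p2 : 0 <= b * (m%:R - ((i - m.+1)%:R + 1)) by rewrite mulr_ge0 ?subr_ge0 // ltW.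
have p3 : 0 < b * z by rewrite mulr_gt0.
have p4 : 0 <= b * (i - m.+1)%:R by rewrite mulr_ge0 // ltW.
apply/andP; split; first lra.
move: p1 p2; rewrite !mulrBr !mulrDr !mulr1 (mulrC b m%:R); lra.
Qed.

Variables (vr : nat -> 'I_(m + m)) (L : nat) (st0 : seq 'I_m).
Hypothesis vtail : forall n, (L <= n)%N -> (vr n : nat) = 1%N.
Hypothesis vgood : good st0 [seq kappa (vr i) | i <- iota 0 L].

Let p0 : R * R := (xs a vr L 0, ys R vr st0 0).
Definition fwd k := iter k (f_ab m a b) (p0, zstar).

Lemma fwd_prop k : (fwd k).1 = iter k (f_a m a) p0 /\ 0 < (fwd k).2 < 1.
Proof.
elim: k => [|k [IH1 IH2]]; first by split => //; exact: zstar_in.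
have [e1 e2] := orbit_all hm ha vtail vgood k.
have hO : Omega3 m a (vr k).+1 (fwd k).
  split; first by rewrite IH1 e1; exact: interior_subset e2.
  by case/andP: IH2 => h1 h2; apply/andP; split; apply: ltW.
rewrite /fwd iterS -/(fwd k) (f_ab_eq hm ha b hO) /=; split.
  by rewrite IH1 e1 -(f_a_eq hm ha (interior_subset e2)) -e1.
apply: fz_in => //; have := ltn_ord (vr k); lia.
Qed.

Lemma fwd_int k : interior (Omega3 m a (vr k).+1) (fwd k).
Proof.
have [e1 e2] := orbit_all hm ha vtail vgood k.
have [f1 f2] := fwd_prop k.
rewrite (surjective_pairing (fwd k)) f1 e1.
exact: Omega3_int_intro.
Qed.

Definition xb k := iter k (Gb a bet0) (xs a vr L 0).
Definition yb k : R := iter k (fun y => y / m%:R) (ys R vr st0 0).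
Definition bk k : R * R * R := ((xb k, yb k), zstar).

Lemma xb01 k : 0 < xb k < 1.
Proof.
elim: k => [|k IH]; first exact: (xs01 hm ha vgood 0).
exact: (Gb_01 hm ha bet0 IH).
Qed.

Lemma yb01 k : 0 < yb k < 1.
Proof.
have hM := mpos R hm; have m1 : (1 : R) <= m%:R by rewrite ler1n (m0' hm).
elim: k => [|k IH]; first exact: ys01.
case/andP: IH => h1 h2; rewrite /yb iterS -/(yb k); apply/andP; split.
  by rewrite divr_gt0.
by rewrite ltr_pdivrMr // mul1r; lra.
Qed.

Lemma bk_step k : f_ab m a b (bk k.+1) = bk k /\
  interior (Omega3 m a (bet0 : nat).+1) (bk k.+1).
Proof.
have hM := mpos R hm.
have hint : interior (Omega3 m a (bet0 : nat).+1) (bk k.+1).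
  apply: Omega3_int_intro; last exact: zstar_in.
  have -> : (bet0 : nat).+1 = (m + 0).+1 by rewrite addn0.
  apply: (OmegaP_int_beta hm ha) => /=.
  - exact: m0' hm.
  - by have := Gb_in hm ha bet0 (xb01 k); rewrite ltnn.
  rewrite mul0r; have := yb01 k => /andP[h1 h2]; apply/andP; split.
    by rewrite divr_gt0.
  by rewrite ltr_pM2r ?invr_gt0.
split => //.
rewrite (f_ab_eq hm ha b (interior_subset hint)) /= ltnn zstar_fix.
rewrite /bk /fa_branch /= ltnn.
congr (_, _, _).
  exact: (Fbranch_Gb hm ha bet0).
by field; apply: lt0r_neq0.
Qed.

Definition qr (r : int) : R * R * R :=
  match r with Posz k => fwd k | Negz k => bk k.+1 end.
Definition vr' (r : int) : 'I_(m + m) :=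
  match r with Posz k => vr k | Negz _ => bet0 end.

Lemma qr_step r : qr (r + 1) = f_ab m a b (qr r).
Proof.
case: r => [k|[|k]].
- by rewrite /= addn1 /fwd iterS.
- by rewrite /= (bk_step 0).1.
- have -> : Negz k.+1 + 1 = Negz k by rewrite !NegzE; lia.
  by rewrite /= (bk_step k.+1).1.
Qed.

Lemma qr_int r : interior (Omega3 m a (vr' r).+1) (qr r).
Proof. case: r => [k|k] /=; [exact: fwd_int | exact: (bk_step k).2]. Qed.
End B2.

Section B3.
Variables (R : realType) (m : nat) (a b : R).
Hypothesis hm : (2 <= m)%N.
Hypothesis ha : 0 < a < m%:R^-1.
Hypothesis hb : 0 < b < m%:R^-1.

Lemma B_two (y : {ptws int -> D_alph m}) : SigmaD y ->
  closure (@piX_ab R m a b) (fun n => (unsplit (y n) : HC_alph m)).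
Proof.
move=> Dy.
apply: (closure_win (win := fun N t => (absz t <= N)%N)).
  by move=> t; exact: nbhs_infty_ge.
move=> N.
pose N1 := N.+1.
pose L := (N1 + N1).+1.
pose vr k := if (k < L)%N then (unsplit (y (k%:Z - N1%:Z)) : 'I_(m + m)) else o1 hm ha.
have vtail n : (L <= n)%N -> (vr n : nat) = 1%N.
  by move=> h; rewrite /vr ltnNge h.
have hw : [seq kappa (vr i) | i <- iota 0 L] = [seq y (- N1%:Z + i%:Z) | i <- iota 0 L].
  apply/eq_in_map => i; rewrite mem_iota add0n => /andP[_ hi].
  by rewrite /vr hi /kappa unsplitK addrC.
have := Dy (- N1%:Z) N1%:Z ltac:(lia).
have -> : absz (N1%:Z - - N1%:Z) = (N1 + N1)%N by rewrite opprK -PoszD.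
rewrite -/L -hw.
case E: (red _) => [s|] // _.
have [hg _] := red_good E [::].
pose st0 := rev (betas s) ++ [::].
pose q n := qr hm ha hb vr L st0 (n + N1%:Z).
pose w n := vr' hm ha hb vr (n + N1%:Z).
have qstep n : q (n + 1) = f_ab m a b (q n).
  by rewrite /q addrAC (qr_step hm ha hb hg).
have qint n : interior (Omega3 m a (w n).+1) (q n).
  exact: (qr_int hm ha hb vtail hg).
exists w; split.
  exists (q 0); split; exists q; split => // n.
  exists (w n).+1 => //=; have := ltn_ord (w n); lia.
move=> t tN.
have E1 : t + N1%:Z = (absz (t + N1%:Z))%:Z by rewrite gez0_abs //; lia.
rewrite /w E1 /= /vr ifT; last by lia.
congr unsplit; congr y; lia.
Qed.
End B3.

Theorem theoremA (R : realType) (m : nat) (hm : (2 <= m)%N)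
  (a a' b : R)
  (ha : 0 < a < m%:R^-1) (ha' : 0 < a' < m%:R^-1) (hb : 0 < b < m%:R^-1) :
  homeo_on (@SigmaHC_plus R m a) (@SigmaD_plus m)
    (fun (w : {ptws nat -> HC_alph m}) (n : nat) => @kappa m (w n) : D_alph m)
  /\
  homeo_on (@SigmaHC R m a' b) (@SigmaD m)
    (fun (w : {ptws int -> HC_alph m}) (n : int) => @kappa m (w n) : D_alph m).
Proof.
split.
- apply: homeo_gen.
  + by move=> w [p [_ hp]]; exact: (A_plus hm ha hp).
  + exact: closed_SigmaD_plus.
  + by move=> y Dy; exact: (B_plus hm ha Dy).
- apply: homeo_gen.
  + by move=> w [p [_ [q [_ hq hi]]]]; exact: (A_two hm ha' hq hi).
  + exact: closed_SigmaD.
  + by move=> y Dy; exact: (B_two hm ha' hb Dy).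
Qed.
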